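(* Let $P$ and $P'$ be programs over a propositional signature $\Sigma$ and $q\in\Sigma$. If $P$ and $P'$ are strongly equivalent, then $f_{SP}(P,q)$ and $f_{SP}(P',q)$ are strongly equivalent.
   Context: A program over $\Sigma$ is a finite set of rules $r$ of the form $a_1\vee\dots\vee a_k\leftarrow b_1,\dots,b_l,\ not\,c_1,\dots,not\,c_m,\ not\,not\,d_1,\dots,not\,not\,d_n$ with atoms in $\Sigma$; write $H(r)=\{a_i\}$, $B^+(r)=\{b_i\}$, $B^-(r)=\{c_i\}$, $B^{--}(r)=\{d_i\}$, $B(r)=B^+(r)\cup\{not\,c: c\in B^-(r)\}\cup\{not\,not\,d:d\in B^{--}(r)\}$ (elements of $B(r)$ are literals); a rule is written $H(r)\leftarrow B(r)$. $\Sigma(r)$, $\Sigma(P)$ are the atoms occurring in $r$, $P$. Reduct: $P^I=\{H(r)\leftarrow B^+(r): r\in P, B^-(r)\cap I=\emptyset, B^{--}(r)\subseteq I\}$. $I$ classically satisfies $r$ if $B^+(r)\subseteq I$, $B^-(r)\cap I=\emptyset$, $B^{--}(r)\subseteq I$ imply $H(r)\cap I\ne\emptyset$. An HT-interpretation $\langle X,Y\rangle$ ($X\subseteq Y$) is an HT-model of $P$ if $Y$ classically satisfies all rules of $P$ and $X$ all rules of $P^Y$. $Y$ is an answer set of $P$ if $\langle Y,Y\rangle$ is an HT-model and no $\langle X,Y\rangle$ with $X\subsetneq Y$ is; $AS(P)$ is the set of answer sets. $P_1,P_2$ are strongly equivalent if $AS(P_1\cup R)=AS(P_2\cup R)$ for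 every program $R$. Normal form: $r$ is tautological if $H(r)\cap B^+(r)\ne\emptyset$ or $B^+(r)\cap B^-(r)\ne\emptyset$ or $B^-(r)\cap B^{--}(r)\ne\emptyset$; $r\in P$ is minimal in $P$ if no $r'\in P$ has ($H(r')\subseteq H(r)$ and $B(r')\subsetneq B(r)$) or ($H(r')\subsetneq H(r)$ and $B(r')\subseteq B(r)$). $NF(P)$ is obtained by: 1. removing tautological rules; 2. removing from $B^{--}(r)$ atoms in $B^+(r)$; 3. removing from $H(r)$ atoms in $B^-(r)$; 4. removing rules not minimal in the resulting program. Notation: for a set $S$ of literals, $not\,(S)=\{not\,s:s\in S\}$, $not\,not\,(S)=\{not\,not\,s:s\in S\}$, simplifying $not\,not\,not\,p=not\,p$ and $not\,not\,not\,not\,p=not\,not\,p$. $B^{\setminus q}(r)=B(r)\setminus\{q,not\,q,not\,not\,q\}$, $H^{\setminus q}(r)=H(r)\setminus\{q\}$. For a set of rules $Q$, $D_q(Q)$ is the set of all sets $not\,(\{l_1,\dots,l_m\})\cup not\,not\,(\{l_{m+1},\dots,l_n\})$ where $\langle\{r_1,\dots,r_m\},\{r_{m+1},\dots,r_n\}\rangle$ is a partition of $Q$ (parts possibly empty), $l_i\in B^{\setminus q}(r_i)$ for $i\le m$, $l_j\in H^{\setminus q}(r_j)$ for $j>m$ (so $D_q(\emptyset)=\{\emptyset\}$). The operator $f_{SP}$: let $P'=NF(P)$, $R=\{r\in P': q\notin\Sigma(r)\}$, $R_0=\{r\in P':q\in B(r)\}$, $R_1=\{r\in P': not\,q\in B(r)\}$,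 $R_2=\{r\in P': not\,not\,q\in B(r), q\notin H(r)\}$, $R_3=\{r\in P': not\,not\,q\in B(r), q\in H(r)\}$, $R_4=\{r\in P': not\,not\,q\notin B(r), q\in H(r)\}$. $P''$ consists of: every $r\in R$; and (1a) for $r_0\in R_0$, $r_4\in R_4$: $H(r_0)\cup H^{\setminus q}(r_4)\leftarrow B^{\setminus q}(r_0)\cup B(r_4)$; (2a) for $r_0\in R_0$, $r_3\in R_3$, $r'\in R_1\cup R_4$: $H(r_0)\cup H^{\setminus q}(r_3)\leftarrow B^{\setminus q}(r_0)\cup B^{\setminus q}(r_3)\cup not\,(H^{\setminus q}(r'))\cup not\,not\,(B^{\setminus q}(r'))$; (3a) for $r_0\in R_0$, $r_3\in R_3$, $h\in H(r_0)$, $D\in D_q((R_0\cup R_2)\setminus\{r_0\})$: $H(r_0)\leftarrow B^{\setminus q}(r_0)\cup\{not\,not\,h\}\cup D\cup B^{\setminus q}(r_3)\cup not\,(H^{\setminus q}(r_3))$; (1b) for $r_2\in R_2$, $r_4\in R_4$: $H(r_2)\leftarrow B^{\setminus q}(r_2)\cup not\,(H^{\setminus q}(r_4))\cup not\,not\,(B(r_4))$; (2b) for $r_2\in R_2$, $r_3\in R_3$, $r'\in R_1\cup R_4$: $H(r_2)\leftarrow B^{\setminus q}(r_2)\cup not\,(H^{\setminus q}(r_3)\cup H^{\setminus q}(r'))\cup not\,not\,(B^{\setminus q}(r_3)\cup B^{\setminus q}(r'))$; (3b) for $r_2\in R_2$, $r_3\in R_3$, $h\in H(r_2)$, $D\in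 D_q((R_0\cup R_2)\setminus\{r_2\})$: $H(r_2)\leftarrow B^{\setminus q}(r_2)\cup not\,(H^{\setminus q}(r_3))\cup not\,not\,(B^{\setminus q}(r_3)\cup\{h\})\cup D$; (4) for $r'\in R_1\cup R_4$, $D\in D_q(R_3\cup R_4)$ with $D\cap not\,(B^{\setminus q}(r'))=\emptyset$: $H^{\setminus q}(r')\leftarrow B^{\setminus q}(r')\cup D$; (5) for $r'\in R_1\cup R_4$, $r_3\in R_3$, $r\in R_0\cup R_2$, $D\in D_q(R_4)$ with $D\cap not\,(B^{\setminus q}(r'))=\emptyset$: $H^{\setminus q}(r')\leftarrow B^{\setminus q}(r')\cup not\,(H(r)\cup H^{\setminus q}(r_3))\cup not\,not\,(B^{\setminus q}(r)\cup B^{\setminus q}(r_3))\cup D$; (6) for $r'\in R_1\cup R_4$, $r_3\in R_3$, $h\in H^{\setminus q}(r')$, $D\in D_q((R_1\cup R_4)\setminus\{r'\})$: $H^{\setminus q}(r')\leftarrow B^{\setminus q}(r')\cup not\,(H^{\setminus q}(r_3))\cup not\,not\,(B^{\setminus q}(r_3)\cup\{h\})\cup D$; (7) for $r_0\in R_0$, $r_3,r_3'\in R_3$ with $r_3\ne r_3'$, $D\in D_q((R_0\cup R_2)\setminus\{r_0\})$, $h\in H(r_0)$: $H(r_0)\cup H^{\setminus q}(r_3)\leftarrow B^{\setminus q}(r_0)\cup B^{\setminus q}(r_3)\cup not\,(H^{\setminus q}(r_3'))\cup not\,not\,(B^{\setminus q}(r_3')\cup\{h\})\cup D$. Then $f_{SP}(P,q)=NF(P'')$.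 *)

(* Defs.v *)
From HB Require Import structures.
From mathcomp Require Import all_boot.
From mathcomp Require Import finmap.
Set Implicit Arguments. Unset Strict Implicit. Unset Printing Implicit Defensive.
Local Open Scope fset_scope.

Section ASP.
(* The signature Sigma is the type of atoms A. *)
Variable A : choiceType.

(* Literals: b (Pos), not c (Neg), not not d (NNeg). *)
Inductive lit := Pos of A | Neg of A | NNeg of A.

Definition lit_enc (l : lit) : (A + A) + A :=
  match l with Pos a => inl (inl a) | Neg a => inl (inr a) | NNeg a => inr a end.
Definition lit_dec (x : (A + A) + A) : lit :=
  match x with inl (inl a) => Pos a | inl (inr a) => Neg a | inr a => NNeg a end.
Lemma lit_encK : cancel lit_enc lit_dec. Proof. by case. Qed.
HB.instance Definition _ := Choice.copy lit (can_type lit_encK).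

Definition atom_of (l : lit) : A := match l with Pos a | Neg a | NNeg a => a end.
Definition isPos (l : lit) : bool := if l is Pos _ then true else false.

(* not l, with not not not p = not p *)
Definition notL (l : lit) : lit :=
  match l with Pos a => Neg a | Neg a => NNeg a | NNeg a => Neg a end.
(* not not l, with not not not p = not p and not not not not p = not not p *)
Definition nnL (l : lit) : lit :=
  match l with Pos a => NNeg a | Neg a => Neg a | NNeg a => NNeg a end.

Definition rule := ({fset A} * {fset lit})%type.
Definition H (r : rule) : {fset A} := r.1.
Definition B (r : rule) : {fset lit} := r.2.

(* Programs are finite sets of rules; operators below produce sets of rules
   given as predicates. *)
Definition rset := rule -> Prop.
Definition of_prog (P : {fset rule}) : rset := fun r => r \in P.

Definition interp := A -> Prop.

Definition sat_cl (I : interp) (r : rule) : Prop :=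
  (forall b, Pos b \in B r -> I b) ->
  (forall c, Neg c \in B r -> ~ I c) ->
  (forall d, NNeg d \in B r -> I d) ->
  exists a, a \in H r /\ I a.

Definition reduct (P : rset) (Y : interp) : rset := fun r' =>
  exists r, P r /\ (forall c, Neg c \in B r -> ~ Y c) /\
            (forall d, NNeg d \in B r -> Y d) /\
            r' = (H r, [fset l in B r | isPos l]).

Definition HT_model (P : rset) (X Y : interp) : Prop :=
  (forall a, X a -> Y a) /\
  (forall r, P r -> sat_cl Y r) /\
  (forall r, reduct P Y r -> sat_cl X r).

Definition answer_set (P : rset) (Y : interp) : Prop :=
  HT_model P Y Y /\
  ~ (exists X : interp, (forall a, X a -> Y a) /\ (exists a, Y a /\ ~ X a) /\
                        HT_model P X Y).

Definition union (P Q : rset) : rset := fun r => P r \/ Q r.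

Definition strongly_equiv (P1 P2 : rset) : Prop :=
  forall R : {fset rule}, forall Y : interp,
    answer_set (union P1 (of_prog R)) Y <-> answer_set (union P2 (of_prog R)) Y.

Definition tautological (r : rule) : Prop :=
  (exists a, a \in H r /\ Pos a \in B r) \/
  (exists a, Pos a \in B r /\ Neg a \in B r) \/
  (exists a, Neg a \in B r /\ NNeg a \in B r).

Definition simp (r : rule) : rule :=
  ([fset a in H r | Neg a \notin B r],
   [fset l in B r | ~~ (if l is NNeg d then Pos d \in B r else false)]).

Definition minimal_in (Q : rset) (r : rule) : Prop :=
  ~ (exists r', Q r' /\
       ((H r' `<=` H r /\ B r' `<` B r) \/ (H r' `<` H r /\ B r' `<=` B r))).

Definition NF (P : rset) : rset :=
  let P1 : rset := fun r => exists r0, P r0 /\ ~ tautological r0 /\ r = simp r0 in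
  fun r => P1 r /\ minimal_in P1 r.

Variable q : A.

Definition Bq (r : rule) : {fset lit} := [fset l in B r | atom_of l != q].
Definition Hq (r : rule) : {fset A} := H r `\ q.
Definition notA (S : {fset A}) : {fset lit} := [fset Neg a | a in S].
Definition notS (S : {fset lit}) : {fset lit} := [fset notL l | l in S].
Definition nnS (S : {fset lit}) : {fset lit} := [fset nnL l | l in S].

Definition occurs_q (r : rule) : Prop :=
  q \in H r \/ exists l, l \in B r /\ atom_of l = q.

Definition Dq (Q : rset) (D : {fset lit}) : Prop :=
  exists c : rule -> lit,
    (forall r, Q r ->
       (exists l, l \in Bq r /\ c r = notL l) \/
       (exists h, h \in Hq r /\ c r = NNeg h)) /\
    (forall x, x \in D <-> exists r, Q r /\ c r = x).

Definition minus_rule (Q : rset) (r0 : rule) : rset := fun r => Q r /\ r <> r0.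

Definition fSP_pre (P : rset) : rset :=
  let P' := NF P in
  let R0 : rset := fun r => P' r /\ Pos q \in B r in
  let R1 : rset := fun r => P' r /\ Neg q \in B r in
  let R2 : rset := fun r => P' r /\ NNeg q \in B r /\ q \notin H r in
  let R3 : rset := fun r => P' r /\ NNeg q \in B r /\ q \in H r in
  let R4 : rset := fun r => P' r /\ NNeg q \notin B r /\ q \in H r in
  let R14 := union R1 R4 in
  let R02 := union R0 R2 in
  fun r =>
  (P' r /\ ~ occurs_q r)
  \/ (exists r0 r4, R0 r0 /\ R4 r4 /\
        r = (H r0 `|` Hq r4, Bq r0 `|` B r4))
  \/ (exists r0 r3 r', R0 r0 /\ R3 r3 /\ R14 r' /\
        r = (H r0 `|` Hq r3,
             Bq r0 `|` Bq r3 `|` notA (Hq r') `|` nnS (Bq r')))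
  \/ (exists r0 r3 h D, R0 r0 /\ R3 r3 /\ h \in H r0 /\ Dq (minus_rule R02 r0) D /\
        r = (H r0,
             Bq r0 `|` [fset NNeg h] `|` D `|` Bq r3 `|` notA (Hq r3)))
  \/ (exists r2 r4, R2 r2 /\ R4 r4 /\
        r = (H r2, Bq r2 `|` notA (Hq r4) `|` nnS (B r4)))
  \/ (exists r2 r3 r', R2 r2 /\ R3 r3 /\ R14 r' /\
        r = (H r2, Bq r2 `|` notA (Hq r3 `|` Hq r') `|` nnS (Bq r3 `|` Bq r')))
  \/ (exists r2 r3 h D, R2 r2 /\ R3 r3 /\ h \in H r2 /\ Dq (minus_rule R02 r2) D /\
        r = (H r2,
             Bq r2 `|` notA (Hq r3) `|` nnS (Bq r3 `|` [fset Pos h]) `|` D))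
  \/ (exists r' D, R14 r' /\ Dq (union R3 R4) D /\ D `&` notS (Bq r') = fset0 /\
        r = (Hq r', Bq r' `|` D))
  \/ (exists r' r3 r0 D, R14 r' /\ R3 r3 /\ R02 r0 /\ Dq R4 D /\
        D `&` notS (Bq r') = fset0 /\
        r = (Hq r',
             Bq r' `|` notA (H r0 `|` Hq r3) `|` nnS (Bq r0 `|` Bq r3) `|` D))
  \/ (exists r' r3 h D, R14 r' /\ R3 r3 /\ h \in Hq r' /\ Dq (minus_rule R14 r') D /\
        r = (Hq r',
             Bq r' `|` notA (Hq r3) `|` nnS (Bq r3 `|` [fset Pos h]) `|` D))
  \/ (exists r0 r3 r3' D h, R0 r0 /\ R3 r3 /\ R3 r3' /\ r3 <> r3' /\
        Dq (minus_rule R02 r0) D /\ h \in H r0 /\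
        r = (H r0 `|` Hq r3,
             Bq r0 `|` Bq r3 `|` notA (Hq r3') `|` nnS (Bq r3' `|` [fset Pos h])
             `|` D)).

Definition fSP (P : rset) : rset := NF (fSP_pre P).

End ASP.

(* Main.v *)
Require Import Defs.
From mathcomp Require Import all_boot finmap zify.
From Stdlib Require Import Classical ClassicalEpsilon PropExtensionality FunctionalExtensionality.
Set Implicit Arguments. Unset Strict Implicit. Unset Printing Implicit Defensive.
Local Open Scope fset_scope.

Section Basic.
Variable A : choiceType.
Implicit Types (U W X Y Z : interp A) (r : rule A) (S : {fset lit A}) (T : {fset A}).

Definition litH U W (l : lit A) : Prop :=
  match l with Pos a => U a | Neg a => ~ W a | NNeg a => W a end.
Definition bodyH U W S : Prop := forall l, l \in S -> litH U W l.
Definition headH U T : Prop := exists a, a \in T /\ U a.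
Definition ruleH U W r : Prop := bodyH U W (B r) -> headH U (H r).
Definition HTm (P : rset A) X Y : Prop :=
  (forall a, X a -> Y a) /\ forall r, P r -> ruleH Y Y r /\ ruleH X Y r.

Lemma HT_modelE P X Y : HT_model P X Y <-> HTm P X Y.
Proof.
split.
- move=> [XY [PY PX]]; split=> // r Pr; split.
  + move=> hb; apply: (PY r Pr).
    * by move=> b /hb.
    * by move=> c /hb.
    * by move=> d /hb.
  + move=> hb.
    have := PX (H r, [fset l in B r | isPos l]).
    case.
    * exists r; split=> //; split; [by move=> c /hb| split; [by move=> d /hb|by []]].
    * move=> b /=; rewrite !inE /= andbT => /hb //.
    * by move=> c /=; rewrite !inE /= andbF.
    * by move=> d /=; rewrite !inE /= andbF.
    * move=> a [ha Xa]; by exists a.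
- move=> [XY HP]; split=> //; split.
  + move=> r Pr hp hn hnn; case: (HP r Pr) => [hY _]; apply: hY.
    by case=> a; [apply: hp|apply: hn|apply: hnn].
  + move=> r' [r [Pr [hn [hnn ->]]]] hp hn' hnn'.
    case: (HP r Pr) => [_ hX].
    have [a [ha Xa]] : headH X (H r).
      apply: hX; case=> a al /=; [apply: hp| apply: hn| apply: hnn] => //.
      by rewrite /= !inE al.
    by exists a.
Qed.

End Basic.
Section NFsec.
Variable A : choiceType.
Implicit Types (U W X Y Z : interp A) (r : rule A) (S : {fset lit A}) (T : {fset A}).

Lemma taut_ruleH U W r : (forall a, U a -> W a) -> tautological r -> ruleH U W r.
Proof.
move=> UW [[a [ha hb]]|[[a [h1 h2]]|[a [h1 h2]]]] hB.
- by exists a; split=> //; apply: (hB _ hb).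
- by exfalso; apply: (hB _ h2); apply: UW; apply: (hB _ h1).
- by exfalso; apply: (hB _ h1); apply: (hB _ h2).
Qed.

Lemma simp_ruleH U W r : (forall a, U a -> W a) -> ruleH U W (simp r) <-> ruleH U W r.
Proof.
move=> UW; rewrite /ruleH /simp /=; split.
- move=> hs hB.
  have [a [ha Ua]] : headH U [fset a in H r | Neg a \notin B r].
    by apply: hs => l; rewrite !inE /= => /andP [/hB].
  by exists a; move: ha; rewrite !inE /= => /andP [].
- move=> hr hB.
  have hB' : bodyH U W (B r).
    move=> l lB; case: (boolP (if l is NNeg d then Pos d \in B r else false)) => hl.
    + move: hl; case: l lB => // d lB hd /=; by apply: UW; apply: (hB (Pos d)); rewrite !inE /= hd.
    + by apply: hB; rewrite !inE /= lB hl.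
  have [a [ha Ua]] := hr hB'.
  exists a; split => //; rewrite !inE /= ha /=; apply/negP => hn.
  have := hB (Neg a); rewrite !inE /= hn /=; move=> /(_ isT) /=.
  by apply; apply: UW.
Qed.
Lemma sub_ruleH U W r r' : H r' `<=` H r -> B r' `<=` B r -> ruleH U W r' -> ruleH U W r.
Proof.
move=> /fsubsetP hH /fsubsetP hB hr hb.
have [a [ha Ua]] : headH U (H r') by apply: hr => l /hB /hb.
by exists a; split=> //; apply: hH.
Qed.

Lemma min_below (Q : rset A) r : Q r ->
  exists r', Q r' /\ minimal_in Q r' /\ H r' `<=` H r /\ B r' `<=` B r.
Proof.
move: {2}(#|` H r| + #|` B r|)%N (leqnn (#|` H r| + #|` B r|)%N) => n.
elim: n r => [|n IH] r.
- move=> hn Qr; exists r; split=> //; split; last by rewrite !fsubset_refl.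
  move=> [r' [_ [[_ hp]|[hp _]]]]; move: hn; rewrite leqn0 addn_eq0 => /andP [/eqP h1 /eqP h2].
  + by have := fproper_ltn_card hp; rewrite h2.
  + by have := fproper_ltn_card hp; rewrite h1.
- move=> hn Qr.
  case: (classic (minimal_in Q r)) => hm.
  + by exists r; rewrite !fsubset_refl.
  + have [r' [Qr' hr']] : exists r', Q r' /\
       ((H r' `<=` H r /\ B r' `<` B r) \/ (H r' `<` H r /\ B r' `<=` B r)).
      by apply: NNPP => hc; apply: hm => hx; apply: hc.
    have [hsH hsB hlt] : [/\ H r' `<=` H r, B r' `<=` B r &
                          (#|` H r'| + #|` B r'| < #|` H r| + #|` B r|)%N].
      case: hr' => [[h1 h2]|[h1 h2]].
      * split=> //; first exact: fproper_sub.
        by have := fsubset_leq_card h1; have := fproper_ltn_card h2; lia.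
      * split=> //; first exact: fproper_sub.
        by have := fproper_ltn_card h1; have := fsubset_leq_card h2; lia.
    have [r'' [Q'' [m'' [h1 h2]]]] := IH r' (ltac:(lia)) Qr'.
    exists r''; split=> //; split=> //; split; apply: fsubset_trans; eassumption.
Qed.
Lemma NF_ruleH (Q : rset A) U W : (forall a, U a -> W a) ->
  (forall r, NF Q r -> ruleH U W r) <-> (forall r, Q r -> ruleH U W r).
Proof.
move=> UW; split.
- move=> hN r Qr.
  case: (classic (tautological r)) => ht; first exact: taut_ruleH.
  pose P1 : rset A := fun r => exists r0, Q r0 /\ ~ tautological r0 /\ r = simp r0.
  have P1r : P1 (simp r) by exists r.
  have [r' [P1r' [m' [h1 h2]]]] := min_below P1r.
  apply/(simp_ruleH _ UW); apply: (sub_ruleH h1 h2); apply: hN; by split.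
- move=> hQ r [[r0 [Qr0 [_ ->]]] _]; apply/(simp_ruleH _ UW); exact: hQ.
Qed.

Lemma NF_HTm (Q : rset A) X Y : HTm (NF Q) X Y <-> HTm Q X Y.
Proof.
split=> -[XY h]; split=> //.
- have h1 := iffLR (NF_ruleH Q (fun a (y : Y a) => y)) (fun r hr => (h r hr).1).
  have h2 := iffLR (NF_ruleH Q XY) (fun r hr => (h r hr).2).
  by move=> r Qr; split; [apply: h1|apply: h2].
- have h1 := iffRL (NF_ruleH Q (fun a (y : Y a) => y)) (fun r hr => (h r hr).1).
  have h2 := iffRL (NF_ruleH Q XY) (fun r hr => (h r hr).2).
  by move=> r Qr; split; [apply: h1|apply: h2].
Qed.
End NFsec.

Lemma cfilter (T : choiceType) (S : {fset T}) (Q : T -> Prop) :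
  exists S' : {fset T}, forall x, x \in S' <-> (x \in S /\ Q x).
Proof.
have : forall s : seq T, exists S' : {fset T}, forall x, x \in S' <-> (x \in s /\ Q x).
  elim=> [|a s [S' hS']].
  - by exists fset0 => x; rewrite inE; split=> // -[].
  - case: (classic (Q a)) => hq.
    + exists (a |` S') => x; rewrite in_fset1U in_cons; split.
      * case/orP=> [/eqP ->|/hS' [h1 h2]]; [by rewrite eqxx | by rewrite h1 orbT].
      * case=> /orP [/eqP ->|h1] h2; [by rewrite eqxx | by apply/orP; right; apply/hS'].
    + exists S' => x; rewrite in_cons; split.
      * by move/hS' => [h1 h2]; rewrite h1 orbT.
      * case=> /orP [/eqP ->|h1] h2 //; by apply/hS'.
move=> /(_ S) [S' hS']; exists S' => x; exact: hS'.
Qed.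

Section SEsec.
Variable A : choiceType.
Implicit Types (U W X Y Z : interp A) (r : rule A) (S : {fset lit A}) (T : {fset A}).

Lemma HTm_union (P R : rset A) X Y : HTm (union P R) X Y <-> HTm P X Y /\ HTm R X Y.
Proof.
split.
- by move=> [XY h]; split; split=> // r hr; apply: h; [left|right].
- by move=> [[XY h1] [_ h2]]; split=> // r [/h1|/h2].
Qed.

Lemma HTeq_SE (P1 P2 : rset A) :
  (forall X Y, HTm P1 X Y <-> HTm P2 X Y) -> strongly_equiv P1 P2.
Proof.
move=> he R Y.
have e : forall X, HT_model (union P1 (of_prog R)) X Y <-> HT_model (union P2 (of_prog R)) X Y.
  move=> X; rewrite !HT_modelE !HTm_union he; by [].
rewrite /answer_set; split=> -[h1 h2]; split.
- exact/e.
- by move=> [X [a [b c]]]; apply: h2; exists X; split=> //; split=> //; apply/e.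
- exact/e.
- by move=> [X [a [b c]]]; apply: h2; exists X; split=> //; split=> //; apply/e.
Qed.

Lemma ruleH_inv (Sg : {fset A}) r U W U' W' :
  (forall a, a \in H r -> a \in Sg) -> (forall l, l \in B r -> atom_of l \in Sg) ->
  (forall a, a \in Sg -> (U a <-> U' a)) -> (forall a, a \in Sg -> (W a <-> W' a)) ->
  ruleH U W r -> ruleH U' W' r.
Proof.
move=> hH hB eU eW hr hb.
have [a [ha Ua]] : headH U (H r).
  apply: hr => l lB; have := hb l lB; have := hB l lB.
  by case: l lB => a /= _ /[dup] /eU h1 /eW h2; rewrite ?h1 ?h2.
by exists a; split=> //; apply/(eU _ (hH _ ha)).
Qed.

Lemma sig_ex (P : {fset rule A}) : exists Sg : {fset A}, forall r, r \in P ->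
  (forall a, a \in H r -> a \in Sg) /\ (forall l, l \in B r -> atom_of l \in Sg).
Proof.
have : forall s : seq (rule A), exists Sg : {fset A}, forall r, r \in s ->
  (forall a, a \in H r -> a \in Sg) /\ (forall l, l \in B r -> atom_of l \in Sg).
  elim=> [|r0 s [Sg hS]]; first by exists fset0.
  exists (Sg `|` H r0 `|` [fset atom_of l | l in B r0]) => r; rewrite in_cons.
  case/orP=> [/eqP ->|/hS [h1 h2]]; split.
  - by move=> a ha; rewrite !inE ha orbT.
  - by move=> l hl; rewrite in_fsetU in_imfset ?orbT.
  - by move=> a /h1 ha; rewrite !inE ha.
  - by move=> l /h2 hl; rewrite !inE hl.
by move=> /(_ P) [Sg h]; exists Sg.
Qed.
Definition facts (Xs : {fset A}) : {fset rule A} :=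
  [fset ([fset a], fset0) | a in Xs].
Definition pairs (Ds : {fset A}) : {fset rule A} :=
  [fset ([fset p.1], [fset Pos p.2]) | p in Ds `*` Ds].

Lemma HTm_tt (P : rset A) X Y : HTm P X Y -> HTm P Y Y.
Proof. by move=> [_ h]; split=> // r /h []. Qed.

Lemma SE_sym (P1 P2 : rset A) : strongly_equiv P1 P2 -> strongly_equiv P2 P1.
Proof. by move=> h R Y; split=> /h. Qed.

Section SEHT.
Variables P1 P2 : {fset rule A}.
Hypothesis hSE : strongly_equiv (of_prog P1) (of_prog P2).
Variable Sg : {fset A}.
Hypothesis hSg : forall r, r \in P1 `|` P2 ->
  (forall a, a \in H r -> a \in Sg) /\ (forall l, l \in B r -> atom_of l \in Sg).

Lemma inv1 (P : {fset rule A}) U W U' W' : P `<=` P1 `|` P2 ->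
  (forall a, a \in Sg -> (U a <-> U' a)) -> (forall a, a \in Sg -> (W a <-> W' a)) ->
  forall r, of_prog P r -> ruleH U W r -> ruleH U' W' r.
Proof.
move=> /fsubsetP hP eU eW r Pr; have /hSg [h1 h2] := hP r Pr; apply: (ruleH_inv h1 h2 eU eW).
Qed.

Lemma sub1 : P1 `<=` P1 `|` P2. Proof. exact: fsubsetUl. Qed.
Lemma sub2 : P2 `<=` P1 `|` P2. Proof. exact: fsubsetUr. Qed.

Lemma tot_SE Y : HTm (of_prog P1) Y Y -> HTm (of_prog P2) Y Y.
Proof.
move=> [_ hY].
have [Ys hYs] := cfilter Sg Y.
pose Y' : interp A := fun a => a \in Ys.
have eY : forall a, a \in Sg -> (Y a <-> Y' a).
  by move=> a aS; rewrite /Y' hYs; split=> [h|[]].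
have hR : forall r, of_prog (facts Ys) r -> exists a, Y' a /\ r = ([fset a], fset0).
  by move=> r /imfsetP [a /= ha ->]; exists a.
have AS1 : answer_set (union (of_prog P1) (of_prog (facts Ys))) Y'.
  split.
  - apply/HT_modelE; split=> // r [Pr|/hR [a [ha ->]]].
    + have := inv1 sub1 eY eY Pr (hY r Pr).1; tauto.
    + by split=> _; exists a; rewrite inE.
  - move=> [X [XY [[a [Ya nXa]] /HT_modelE [_ hX]]]]; apply: nXa.
    have [b [hb Xb]] : headH X [fset a].
      apply: (hX ([fset a], fset0) (or_intror (in_imfset _ _ Ya))).2 => l.
      by rewrite inE.
    by move: hb; rewrite inE => /eqP <-.
have [/HT_modelE [_ h2] _] := (hSE (facts Ys) Y').1 AS1.
split=> // r Pr.
have e' : forall a, a \in Sg -> (Y' a <-> Y a) by move=> a /eY; tauto.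
have := inv1 sub2 e' e' Pr (h2 r (or_introl Pr)).1; tauto.
Qed.


Lemma step_SE X Y : HTm (of_prog P1) X Y -> HTm (of_prog P2) X Y.
Proof.
move=> h1; have hY2 := tot_SE (HTm_tt h1).
case: h1 => XY h1.
apply: NNPP => hn.
have [Xs hXs] := cfilter Sg X.
have [Ys hYs] := cfilter Sg Y.
have [Ds hDs] := cfilter Sg (fun a => Y a /\ ~ X a).
pose X' : interp A := fun a => a \in Xs.
pose Y' : interp A := fun a => a \in Ys.
have eX : forall a, a \in Sg -> (X a <-> X' a).
  by move=> a aS; rewrite /X' hXs; split=> [h|[]].
have eY : forall a, a \in Sg -> (Y a <-> Y' a).
  by move=> a aS; rewrite /Y' hYs; split=> [h|[]].
have eX' : forall a, a \in Sg -> (X' a <-> X a) by move=> a /eX; tauto.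
have eY' : forall a, a \in Sg -> (Y' a <-> Y a) by move=> a /eY; tauto.
have [d hd] : exists d, d \in Ds.
  apply: NNPP => hnd; apply: hn; split=> // r Pr; split; first exact: (hY2.2 r Pr).1.
  have eYX : forall a, a \in Sg -> (Y a <-> X a).
    move=> a aS; split; last exact: XY.
    move=> Ya; apply: NNPP => nXa; apply: hnd; exists a; exact/hDs.
  exact: (inv1 sub2 eYX (fun a _ => iff_refl (Y a)) Pr (hY2.2 r Pr).1).
pose R := facts Xs `|` pairs Ds.
have hR : forall r, of_prog R r ->
  (exists a, X' a /\ r = ([fset a], fset0)) \/
  (exists a b, a \in Ds /\ b \in Ds /\ r = ([fset a], [fset Pos b])).
  move=> r; rewrite /of_prog in_fsetU => /orP [/imfsetP [a /= ha ->]|/imfsetP [[a b] /= hab ->]].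
  - by left; exists a.
  - by right; exists a, b; move: hab; rewrite in_fsetM => /andP [-> ->].
have XsYs : forall a, X' a -> Y' a.
  by move=> a /hXs [aS Xa]; apply/hYs; split=> //; exact: XY.
have DsYs : forall a, a \in Ds -> Y' a /\ ~ X' a.
  by move=> a /hDs [aS [Ya nXa]]; split; [apply/hYs|move/hXs => []].
have hRY : forall r, of_prog R r -> ruleH Y' Y' r.
  move=> r /hR [[a [ha ->]]|[a [b [ha [hb ->]]]]] _.
  - by exists a; rewrite inE; split=> //; exact: XsYs.
  - by exists a; rewrite inE; split=> //; case: (DsYs a ha).
have hRX : forall r, of_prog R r -> ruleH X' Y' r.
  move=> r /hR [[a [ha ->]]|[a [b [ha [hb ->]]]]] hb'.
  - by exists a; rewrite inE.
  - have := hb' (Pos b); rewrite inE eqxx => /(_ isT) /= Xb.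
    by case: (DsYs b hb).
have nAS1 : ~ answer_set (union (of_prog P1) (of_prog R)) Y'.
  move=> [_ hmin]; apply: hmin; exists X'; split=> //; split.
    by exists d; case: (DsYs d hd).
  apply/HT_modelE; split=> // r [Pr|Rr]; last by split; [apply: hRY|apply: hRX].
  split.
  - exact: (inv1 sub1 eY eY Pr (h1 r Pr).1).
  - exact: (inv1 sub1 eX eY Pr (h1 r Pr).2).
apply: nAS1; apply/(hSE R Y'); split.
- apply/HT_modelE; split=> // r [Pr|Rr]; last by split; apply: hRY.
  have := inv1 sub2 eY eY Pr (hY2.2 r Pr).1; tauto.
- move=> [Z [ZY [[a [Ya nZa]] /HT_modelE [_ hZ]]]].
  have XZ : forall a, X' a -> Z a.
    move=> b Xb; have [c [/[!inE] /eqP -> //]] : headH Z [fset b].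
    apply: (hZ ([fset b], fset0) (or_intror _)).2; last by move=> l; rewrite inE.
    by rewrite /of_prog in_fsetU in_imfset.
  case: (classic (exists b, b \in Ds /\ Z b)) => [[b [hb Zb]]|hnb].
  + apply: nZa.
    case: (classic (X' a)) => [/XZ //|nXa].
    have aDs : a \in Ds.
      move: Ya => /hYs [aS Ya]; apply/hDs; split=> //; split=> // Xa; apply: nXa; exact/eX.
    have [c [/[!inE] /eqP -> //]] : headH Z [fset a].
    apply: (hZ ([fset a], [fset Pos b]) (or_intror _)).2.
    * by rewrite /of_prog in_fsetU; apply/orP; right; apply/imfsetP; exists (a, b) => //; rewrite in_fsetM aDs hb.
    * by move=> l; rewrite inE => /eqP ->.
  + apply: hn; split=> // r Pr; split; first exact: (hY2.2 r Pr).1.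
    have eZ : forall a, a \in Sg -> (Z a <-> X a).
      move=> b bS; split.
      * move=> Zb; apply: NNPP => nXb; apply: hnb; exists b; split=> //.
        apply/hDs; split=> //; split=> //; apply/eY'=> //; exact: ZY.
      * by move=> /(eX _ bS) /XZ.
    exact: (inv1 sub2 eZ eY' Pr (hZ r (or_introl Pr)).2).
Qed.

End SEHT.

Lemma SE_HTeq (P1 P2 : {fset rule A}) : strongly_equiv (of_prog P1) (of_prog P2) ->
  forall X Y, HTm (of_prog P1) X Y <-> HTm (of_prog P2) X Y.
Proof.
move=> hSE X Y.
have [Sg hSg] := sig_ex (P1 `|` P2).
split; first by apply: (@step_SE P1 P2 hSE Sg hSg).
apply: (@step_SE P2 P1 (SE_sym hSE) Sg); by rewrite fsetUC.
Qed.
End SEsec.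

Section Main.
Variables (A : choiceType) (q : A) (P0 : {fset rule A}).
Implicit Types (U W X Y Z : interp A) (r : rule A) (S : {fset lit A}) (T : {fset A}).

Definition Pn : rset A := NF (of_prog P0).
Definition R0 r := Pn r /\ Pos q \in B r.
Definition R1 r := Pn r /\ Neg q \in B r.
Definition R2 r := Pn r /\ NNeg q \in B r /\ q \notin H r.
Definition R3 r := Pn r /\ NNeg q \in B r /\ q \in H r.
Definition R4 r := Pn r /\ NNeg q \notin B r /\ q \in H r.
Definition Rn r := Pn r /\ ~ occurs_q q r.

Lemma nfF r : Pn r ->
  (forall a, Pos a \in B r -> [/\ a \notin H r, Neg a \notin B r & NNeg a \notin B r]) /\
  (forall a, Neg a \in B r -> a \notin H r /\ NNeg a \notin B r).
Proof.
move=> [[r0 [_ [ht ->]]] _]; rewrite /simp /H /B /=.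
split=> a; rewrite !inE /= => /andP [h1 h2].
- split; apply/negP.
  + move=> /andP [h3 h4]; apply: ht; left; by exists a.
  + move=> /andP [h3 h4]; apply: ht; right; left; by exists a.
  + by move=> /andP [h3]; rewrite h1.
- split; apply/negP.
  + by move=> /andP [h3]; rewrite h1.
  + move=> /andP [h3 h4]; apply: ht; right; right; by exists a.
Qed.

Lemma Pn_fin r : Pn r -> r \in [fset simp r0 | r0 in P0].
Proof. move=> [[r0 [h0 [_ ->]]] _]; exact: in_imfset. Qed.

Lemma occursE r : occurs_q q r <->
  (q \in H r) \/ (Pos q \in B r) \/ (Neg q \in B r) \/ (NNeg q \in B r).
Proof.
split.
- case=> [->|[l [hl hq]]]; [by left|right].
  by case: l hl hq => a hl /= <-; [left|right;left|right;right].
- case=> [h|[h|[h|h]]]; [by left|right..]; eexists; split; eauto.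
Qed.

Lemma R0F r : R0 r -> [/\ Neg q \notin B r, NNeg q \notin B r & q \notin H r].
Proof. by move=> [/nfF [h _] /h [? ? ?]]. Qed.
Lemma R1F r : R1 r -> [/\ Pos q \notin B r, NNeg q \notin B r & q \notin H r].
Proof.
move=> [/nfF [h1 h2] hn]; have [? ?] := h2 _ hn; split=> //.
by apply/negP => /h1 [_ /negP].
Qed.
Lemma R2F r : R2 r -> Pos q \notin B r /\ Neg q \notin B r.
Proof.
move=> [/nfF [h1 h2] [hn _]]; split; apply/negP.
- by move=> /h1 [_ _ /negP].
- by move=> /h2 [_ /negP].
Qed.
Lemma R3F r : R3 r -> Pos q \notin B r /\ Neg q \notin B r.
Proof.
move=> [/nfF [h1 h2] [hn _]]; split; apply/negP.
- by move=> /h1 [_ _ /negP].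
- by move=> /h2 [_ /negP].
Qed.
Lemma R4F r : R4 r -> Pos q \notin B r /\ Neg q \notin B r.
Proof.
move=> [/nfF [h1 h2] [_ hq]]; split; apply/negP.
- by move=> /h1 [/negP].
- by move=> /h2 [/negP].
Qed.
Lemma RnF r : Rn r -> [/\ Pos q \notin B r, Neg q \notin B r, NNeg q \notin B r & q \notin H r].
Proof.
move=> [_ ho]; split; apply/negP => h; apply: ho; apply/occursE; tauto.
Qed.

Definition qfB S := forall l, l \in S -> atom_of l != q.
Definition qfH T := q \notin T.
Definition agree U U' := forall a, a != q -> (U a <-> U' a).

Lemma bodyH_agree S U W U' W' : qfB S -> agree U U' -> agree W W' ->
  bodyH U W S -> bodyH U' W' S.
Proof.
move=> hS eU eW hb l hl; have := hb l hl; have := hS l hl.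
by case: l hl => a _ /= /[dup] /eU h1 /eW h2; rewrite ?h1 ?h2.
Qed.

Lemma headH_agree T U U' : qfH T -> agree U U' -> headH U T -> headH U' T.
Proof.
move=> hT eU [a [ha Ua]]; exists a; split=> //; apply/(eU a) => //.
by apply: contraNneq hT => <-.
Qed.

Lemma qfB_Bq r : qfB (Bq q r). Proof. by move=> l; rewrite !inE /= => /andP []. Qed.
Lemma qfH_Hq r : qfH (Hq q r). Proof. by rewrite /qfH !inE eqxx. Qed.

Lemma body_split U W r : bodyH U W (B r) <->
  bodyH U W (Bq q r) /\ (Pos q \in B r -> U q) /\ (Neg q \in B r -> ~ W q) /\
  (NNeg q \in B r -> W q).
Proof.
split.
- move=> hb; split; last by split; [move/hb|split; move/hb].
  by move=> l; rewrite !inE /= => /andP [/hb].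
- move=> [hb [h1 [h2 h3]]] l hl.
  case: (eqVneq (atom_of l) q) => e.
  + by case: l hl e => a hl /= e; subst a; [apply: h1|apply: h2|apply: h3].
  + by apply: hb; rewrite !inE /= hl e.
Qed.

Lemma head_split U r : headH U (H r) <-> headH U (Hq q r) \/ (q \in H r /\ U q).
Proof.
split.
- move=> [a [ha Ua]]; case: (eqVneq a q) => e.
  + by subst a; right.
  + by left; exists a; rewrite !inE e ha.
- case=> [[a [ha Ua]]|[h1 h2]].
  + by exists a; move: ha; rewrite !inE => /andP [].
  + by exists q.
Qed.

Section Lev.
Variable Y : interp A.
Hypothesis hYq : ~ Y q.
Definition addq Z : interp A := fun a => Z a \/ a = q.
Definition bb Z r := bodyH Z Y (Bq q r).
Definition hh Z r := headH Z (Hq q r).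

Lemma agree_addq Z : agree (addq Z) Z.
Proof. by move=> a /eqP aq; rewrite /addq; split=> [[]|] //; left. Qed.
Lemma agree_sym U U' : agree U U' -> agree U' U.
Proof. by move=> h a /h; tauto. Qed.
Lemma agree_refl U : agree U U. Proof. by []. Qed.

Lemma bb_addq Z r : bodyH (addq Z) (addq Y) (Bq q r) <-> bb Z r.
Proof.
split=> h.
- exact (bodyH_agree (@qfB_Bq r) (agree_addq Z) (agree_addq Y) h).
- exact (bodyH_agree (@qfB_Bq r) (agree_sym (agree_addq Z)) (agree_sym (agree_addq Y)) h).
Qed.
Lemma bb_Yq Z r : bodyH Z (addq Y) (Bq q r) <-> bb Z r.
Proof.
split=> h.
- exact (bodyH_agree (@qfB_Bq r) (agree_refl Z) (agree_addq Y) h).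
- exact (bodyH_agree (@qfB_Bq r) (agree_refl Z) (agree_sym (agree_addq Y)) h).
Qed.
Lemma hh_addq Z r : headH (addq Z) (Hq q r) <-> hh Z r.
Proof.
split=> h.
- exact (headH_agree (@qfH_Hq r) (agree_addq Z) h).
- exact (headH_agree (@qfH_Hq r) (agree_sym (agree_addq Z)) h).
Qed.

Lemma ruleZY Z r : (forall a, Z a -> Y a) -> ruleH Z Y r <->
  (Pos q \notin B r -> NNeg q \notin B r -> bb Z r -> hh Z r).
Proof.
move=> ZY; have nZ : ~ Z q by move/ZY.
rewrite /ruleH; split.
- move=> h np nnp hb; have /head_split [//|[_ //]] : headH Z (H r).
  apply: h; apply/body_split; split=> //; split; last split.
  + by move=> hp; rewrite hp in np.
  + by [].
  + by move=> hp; rewrite hp in nnp.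
- move=> h /body_split [hb [h1 [_ h3]]]; apply/head_split; left; apply: h => //.
  + by apply/negP => /h1.
  + by apply/negP => /h3.
Qed.

Lemma ruleZYq Z r : (forall a, Z a -> Y a) -> ruleH Z (addq Y) r <->
  (Pos q \notin B r -> Neg q \notin B r -> bb Z r -> hh Z r).
Proof.
move=> ZY; have nZ : ~ Z q by move/ZY.
rewrite /ruleH; split.
- move=> h np nnp hb; have /head_split [//|[_ //]] : headH Z (H r).
  apply: h; apply/body_split; split; first exact/bb_Yq.
  split; last split.
  + by move=> hp; rewrite hp in np.
  + by move=> hp; rewrite hp in nnp.
  + by move=> _; right.
- move=> h /body_split [hb [h1 [h2 _]]]; apply/head_split; left; apply: h.
  + by apply/negP => /h1.
  + by apply/negP => /h2; apply; right.
  + exact/bb_Yq.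
Qed.

Lemma ruleZqYq Z r : ruleH (addq Z) (addq Y) r <->
  (Neg q \notin B r -> bb Z r -> hh Z r \/ q \in H r).
Proof.
rewrite /ruleH; split.
- move=> h nnp hb.
  have /head_split [/hh_addq|[]] : headH (addq Z) (H r); [|by left|by right].
  apply: h; apply/body_split; split; first exact/bb_addq.
  split; last split.
  + by move=> _; right.
  + by move=> hp; rewrite hp in nnp.
  + by move=> _; right.
- move=> h /body_split [hb [_ [h2 _]]]; apply/head_split.
  have : Neg q \notin B r by apply/negP => /h2; apply; right.
  move=> /h /(_ (iffLR (bb_addq Z r) hb)) [/hh_addq|] hq; [by left|by right; split=> //; right].
Qed.

Definition A' Z := forall r, R1 r \/ R4 r \/ Rn r -> bb Z r -> hh Z r.
Definition B' Z := forall r, R0 r \/ R2 r \/ Rn r -> bb Z r -> hh Z r.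
Definition C' Z := forall r, R2 r \/ R3 r \/ R4 r \/ Rn r -> bb Z r -> hh Z r.

Lemma notocc r : Pos q \notin B r -> Neg q \notin B r -> NNeg q \notin B r -> q \notin H r ->
  ~ occurs_q q r.
Proof.
move=> /negP h1 /negP h2 /negP h3 /negP h4 /occursE; tauto.
Qed.

Lemma MA_iff Z : (forall a, Z a -> Y a) -> (forall r, Pn r -> ruleH Z Y r) <-> A' Z.
Proof.
move=> ZY; split.
- move=> h r hr; have Pr : Pn r by case: hr => [[]|[[]|[]]].
  have := h r Pr; rewrite (ruleZY _ ZY); apply.
  + by case: hr => [/R1F []|[/R4F []|/RnF []]].
  + by case: hr => [/R1F []|[[_ []]|/RnF []]].
- move=> h r Pr; apply/(ruleZY _ ZY) => np nnp.
  apply: h; case: (boolP (Neg q \in B r)) => nq; first by left.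
  case: (boolP (q \in H r)) => hq; first by right; left.
  by right; right; split=> //; apply: notocc.
Qed.

Lemma MB_iff Z : (forall r, Pn r -> ruleH (addq Z) (addq Y) r) <-> B' Z.
Proof.
split.
- move=> h r hr hb; have Pr : Pn r by case: hr => [[]|[[]|[]]].
  have := h r Pr; rewrite ruleZqYq.
  have [nq hq] : Neg q \notin B r /\ q \notin H r.
    case: hr => [/R0F [? ? ?]|[h2|/RnF [? ? ? ?]]] //.
    by split; [exact: (R2F h2).2| exact: h2.2.2].
  by move=> /(_ nq hb) [//|]; rewrite (negbTE hq).
- move=> h r Pr; apply/ruleZqYq => nq hb.
  case: (boolP (q \in H r)) => hq; first by right.
  left; apply: h hb.
  case: (boolP (Pos q \in B r)) => pq; first by left.
  case: (boolP (NNeg q \in B r)) => nnq; first by right; left.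
  by right; right; split=> //; apply: notocc.
Qed.

Lemma MC_iff Z : (forall a, Z a -> Y a) -> (forall r, Pn r -> ruleH Z (addq Y) r) <-> C' Z.
Proof.
move=> ZY; split.
- move=> h r hr; have Pr : Pn r by case: hr => [[]|[[]|[[]|[]]]].
  have := h r Pr; rewrite (ruleZYq _ ZY); apply.
  + by case: hr => [/R2F []|[/R3F []|[/R4F []|/RnF []]]].
  + by case: hr => [/R2F []|[/R3F []|[/R4F []|/RnF []]]].
- move=> h r Pr; apply/(ruleZYq _ ZY) => np nq.
  apply: h.
  case: (boolP (NNeg q \in B r)) => nnq.
    by case: (boolP (q \in H r)) => hq; [right; left|left].
  case: (boolP (q \in H r)) => hq; first by right; right; left.
  by right; right; right; split=> //; apply: notocc.
Qed.

Lemma eBU U W S1 S2 : bodyH U W (S1 `|` S2) = (bodyH U W S1 /\ bodyH U W S2).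
Proof.
apply: propositional_extensionality; split.
- by move=> h; split=> l hl; apply: h; rewrite inE hl ?orbT.
- by move=> [h1 h2] l; rewrite inE => /orP [/h1|/h2].
Qed.
Lemma eHU U T1 T2 : headH U (T1 `|` T2) = (headH U T1 \/ headH U T2).
Proof.
apply: propositional_extensionality; split.
- by move=> [a [/[!inE] /orP [h|h] Ua]]; [left|right]; exists a.
- by case=> [[a [h Ua]]|[a [h Ua]]]; exists a; rewrite inE h ?orbT.
Qed.
Lemma eBnotA U W T : bodyH U W (notA T) = ~ headH W T.
Proof.
apply: propositional_extensionality; split.
- move=> h [a [ha Wa]]; have := h (Neg a) (in_imfset _ _ ha); by apply.
- by move=> h l /imfsetP [a /= ha ->] Wa; apply: h; exists a.
Qed.
Lemma eBnnS U W S : bodyH U W (nnS S) = bodyH W W S.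
Proof.
apply: propositional_extensionality; split.
- move=> h l hl; have := h (nnL l) (in_imfset _ _ hl); by case: l hl.
- by move=> h l /imfsetP [l' /= hl' ->]; have := h l' hl'; case: l' hl'.
Qed.
Lemma eB1 U W l : bodyH U W [fset l] = litH U W l.
Proof.
apply: propositional_extensionality; split.
- by move=> h; apply: h; rewrite inE.
- by move=> h l'; rewrite inE => /eqP ->.
Qed.
Lemma eHr Z r : (forall a, Z a -> Y a) -> headH Z (H r) = hh Z r.
Proof.
move=> ZY; apply: propositional_extensionality; rewrite head_split; split.
- by case=> // -[_ /ZY].
- by left.
Qed.
Lemma eBR4 U W r : R4 r -> bodyH U W (B r) = bodyH U W (Bq q r).
Proof.
move=> h4; have [np nq] := R4F h4; have nnq := h4.2.1.
apply: propositional_extensionality; rewrite body_split; split; first by case.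
move=> hb; split=> //; split; last split.
- by move=> hp; rewrite hp in np.
- by move=> hp; rewrite hp in nq.
- by move=> hp; rewrite hp in nnq.
Qed.

Lemma mono_bb Z r : (forall a, Z a -> Y a) -> bb Z r -> bb Y r.
Proof. by move=> ZY hb l /hb; case: l => //= a /ZY. Qed.
Lemma mono_hh Z r : (forall a, Z a -> Y a) -> hh Z r -> hh Y r.
Proof. by move=> ZY [a [ha /ZY Ya]]; exists a. Qed.

Lemma litH_notL U l : litH U Y (notL l) <-> ~ litH Y Y l.
Proof. case: l => a /=; [tauto| split; [move=> h nh; exact: nh h| exact: NNPP]| tauto]. Qed.

Lemma Dq_sound (Q : rset A) D Z : Dq q Q D -> bodyH Z Y D ->
  forall r, Q r -> bb Y r -> hh Y r.
Proof.
move=> [c [hc hD]] hb r Qr hbr.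
have cD : c r \in D by apply/hD; exists r.
have := hb _ cD; case: (hc r Qr) => [[l [hl ->]]|[a [ha ->]]].
- by move/litH_notL => []; apply: hbr.
- by move=> /= Ya; exists a.
Qed.

Lemma Dq_ex (Q : rset A) : (forall r, Q r -> Pn r) -> (forall r, Q r -> bb Y r -> hh Y r) ->
  exists D, Dq q Q D /\ forall Z, bodyH Z Y D.
Proof.
move=> QP hQ.
have hx : forall r, exists x : lit A, Q r ->
   (((exists l, l \in Bq q r /\ x = notL l) \/ (exists h, h \in Hq q r /\ x = NNeg h))
    /\ litH Y Y x /\ ~~ isPos x).
  move=> r; case: (classic (Q r)) => Qr; last by exists (NNeg q).
  case: (classic (bb Y r)) => hb.
  - have [a [ha Ya]] := hQ r Qr hb; exists (NNeg a) => _; split; last by [].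
    by right; exists a.
  - have [l [hl nl]] : exists l, l \in Bq q r /\ ~ litH Y Y l.
      by apply: NNPP => hn; apply: hb => l hl; apply: NNPP => nl; apply: hn; exists l.
    exists (notL l) => _; split; first by left; exists l.
    by split; [apply/litH_notL|case: (l)].
pose c := fun r => proj1_sig (constructive_indefinite_description _ (hx r)).
have hc : forall r, Q r -> _ := fun r => proj2_sig (constructive_indefinite_description _ (hx r)).
have [S' hS'] := cfilter [fset simp r0 | r0 in P0] Q.
exists [fset c r | r in S']; split.
- exists c; split; first by move=> r /hc [].
  move=> x; split.
  + by move=> /imfsetP [r /= /hS' [_ Qr] ->]; exists r.
  + move=> [r [Qr <-]]; apply: in_imfset; apply/hS'; split=> //; apply: Pn_fin; exact: QP.
- move=> Z l /imfsetP [r /= /hS' [_ Qr] ->].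
  have [_ [h1 h2]] := hc r Qr; move: h1 h2; rewrite /c; case: (proj1_sig _) => //.
Qed.

Lemma Dq_disj (Q : rset A) D r' : Dq q Q D -> bodyH Y Y D -> bb Y r' ->
  D `&` notS (Bq q r') = fset0.
Proof.
move=> [c [hc hD]] hb hr; apply/fsetP => x; rewrite !inE.
apply/negP => /andP [xD /imfsetP [l /= hl e]]; subst x.
by have /litH_notL := hb _ xD; apply; apply: hr.
Qed.

Section Shapes.
Variable Z : interp A.
Hypothesis ZY : forall a, Z a -> Y a.
Let YY : forall a, Y a -> Y a := fun a h => h.

Ltac shp := rewrite /ruleH /bb /hh /= ?eBU ?eHU ?eBnotA ?eBnnS ?eBU ?eHU ?eB1 /=.

Lemma s1a r0 r4 : R4 r4 -> ruleH Z Y (H r0 `|` Hq q r4, Bq q r0 `|` B r4) <->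
  (bb Z r0 -> bb Z r4 -> hh Z r0 \/ hh Z r4).
Proof. move=> h4; shp; rewrite (eBR4 _ _ h4) (eHr _ ZY) /hh; tauto. Qed.

Lemma s2a r0 r3 r' : ruleH Z Y (H r0 `|` Hq q r3,
   Bq q r0 `|` Bq q r3 `|` notA (Hq q r') `|` nnS (Bq q r')) <->
  (bb Z r0 -> bb Z r3 -> ~ hh Y r' -> bb Y r' -> hh Z r0 \/ hh Z r3).
Proof. shp; rewrite (eHr _ ZY) /hh; tauto. Qed.

Lemma s3a r0 r3 h D : ruleH Z Y (H r0,
   Bq q r0 `|` [fset NNeg h] `|` D `|` Bq q r3 `|` notA (Hq q r3)) <->
  (bb Z r0 -> Y h -> bodyH Z Y D -> bb Z r3 -> ~ hh Y r3 -> hh Z r0).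
Proof. shp; rewrite (eHr _ ZY) /hh; tauto. Qed.

Lemma s1b r2 r4 : R4 r4 -> ruleH Z Y (H r2, Bq q r2 `|` notA (Hq q r4) `|` nnS (B r4)) <->
  (bb Z r2 -> ~ hh Y r4 -> bb Y r4 -> hh Z r2).
Proof. move=> h4; shp; rewrite (eBR4 _ _ h4) (eHr _ ZY) /hh; tauto. Qed.

Lemma s2b r2 r3 r' : ruleH Z Y (H r2,
   Bq q r2 `|` notA (Hq q r3 `|` Hq q r') `|` nnS (Bq q r3 `|` Bq q r')) <->
  (bb Z r2 -> ~ (hh Y r3 \/ hh Y r') -> bb Y r3 -> bb Y r' -> hh Z r2).
Proof. shp; rewrite (eHr _ ZY) /hh; tauto. Qed.

Lemma s3b r2 r3 h D : ruleH Z Y (H r2,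
   Bq q r2 `|` notA (Hq q r3) `|` nnS (Bq q r3 `|` [fset Pos h]) `|` D) <->
  (bb Z r2 -> ~ hh Y r3 -> bb Y r3 -> Y h -> bodyH Z Y D -> hh Z r2).
Proof. shp; rewrite (eHr _ ZY) /hh; tauto. Qed.

Lemma s4 r' D : ruleH Z Y (Hq q r', Bq q r' `|` D) <->
  (bb Z r' -> bodyH Z Y D -> hh Z r').
Proof. shp; tauto. Qed.

Lemma s5 r' r3 r0 D : ruleH Z Y (Hq q r',
   Bq q r' `|` notA (H r0 `|` Hq q r3) `|` nnS (Bq q r0 `|` Bq q r3) `|` D) <->
  (bb Z r' -> ~ (hh Y r0 \/ hh Y r3) -> bb Y r0 -> bb Y r3 -> bodyH Z Y D -> hh Z r').
Proof. shp; rewrite (eHr _ YY) /hh; tauto. Qed.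

Lemma s6 r' r3 h D : ruleH Z Y (Hq q r',
   Bq q r' `|` notA (Hq q r3) `|` nnS (Bq q r3 `|` [fset Pos h]) `|` D) <->
  (bb Z r' -> ~ hh Y r3 -> bb Y r3 -> Y h -> bodyH Z Y D -> hh Z r').
Proof. shp; tauto. Qed.

Lemma s7 r0 r3 r3' D h : ruleH Z Y (H r0 `|` Hq q r3,
   Bq q r0 `|` Bq q r3 `|` notA (Hq q r3') `|` nnS (Bq q r3' `|` [fset Pos h]) `|` D) <->
  (bb Z r0 -> bb Z r3 -> ~ hh Y r3' -> bb Y r3' -> Y h -> bodyH Z Y D -> hh Z r0 \/ hh Z r3).
Proof. shp; rewrite (eHr _ ZY) /hh; tauto. Qed.

Lemma sRn r : Rn r -> ruleH Z Y r <-> (bb Z r -> hh Z r).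
Proof.
move=> /RnF [np nq nnq hq]; rewrite (ruleZY _ ZY); split; last by move=> h _ _.
by move=> h; apply: h.
Qed.

End Shapes.

Lemma ex_notA : ~ A' Y -> exists r, (R1 r \/ R4 r \/ Rn r) /\ bb Y r /\ ~ hh Y r.
Proof.
move=> h; apply: NNPP => hn; apply: h => r hr hb; apply: NNPP => nh; apply: hn; by exists r.
Qed.
Lemma ex_notB : ~ B' Y -> exists r, (R0 r \/ R2 r \/ Rn r) /\ bb Y r /\ ~ hh Y r.
Proof.
move=> h; apply: NNPP => hn; apply: h => r hr hb; apply: NNPP => nh; apply: hn; by exists r.
Qed.
Lemma ex_notC : ~ C' Y -> exists r, (R2 r \/ R3 r \/ R4 r \/ Rn r) /\ bb Y r /\ ~ hh Y r.
Proof.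
move=> h; apply: NNPP => hn; apply: h => r hr hb; apply: NNPP => nh; apply: hn; by exists r.
Qed.

Lemma h_in h r : h \in H r -> Y h -> hh Y r.
Proof.
move=> hh0 Yh; exists h; split=> //; rewrite !inE hh0 andbT.
by apply/eqP => e; apply: hYq; rewrite -e.
Qed.
Lemma hq_in h r : h \in Hq q r -> Y h -> hh Y r.
Proof. by move=> hh0 Yh; exists h. Qed.

Lemma exclB r0 h D Z : ~ B' Y -> A' Y -> h \in H r0 -> Y h ->
  Dq q (minus_rule (union R0 R2) r0) D -> bodyH Z Y D -> False.
Proof.
move=> nB hA hh0 Yh hD bD.
have [r [hr [br nhr]]] := ex_notB nB.
case: (classic (r = r0)) => e.
- by subst r; apply: nhr; exact: h_in hh0 Yh.
- apply: nhr; case: hr => [h0|[h2|hn]].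
  + by apply: (Dq_sound hD bD) br; split=> //; left.
  + by apply: (Dq_sound hD bD) br; split=> //; right.
  + by apply: hA br; right; right.
Qed.

Lemma exclA r' h D Z : ~ A' Y -> B' Y -> h \in Hq q r' -> Y h ->
  Dq q (minus_rule (union R1 R4) r') D -> bodyH Z Y D -> False.
Proof.
move=> nA hB hh0 Yh hD bD.
have [r [hr [br nhr]]] := ex_notA nA.
case: (classic (r = r')) => e.
- by subst r; apply: nhr; exact: hq_in hh0 Yh.
- apply: nhr; case: hr => [h1|[h4|hn]].
  + by apply: (Dq_sound hD bD) br; split=> //; left.
  + by apply: (Dq_sound hD bD) br; split=> //; right.
  + by apply: hB br; right; right.
Qed.

Lemma sound Z : (forall a, Z a -> Y a) -> (A' Y \/ (B' Y /\ ~ C' Y)) -> (A' Y -> A' Z) ->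
  (B' Y /\ ~ C' Y -> C' Z \/ B' Z) ->
  forall r, fSP_pre q (of_prog P0) r -> ruleH Z Y r.
Proof.
move=> ZY H1 H2 H3 r.
case=> [hR|[h1a|[h2a|[h3a|[h1b|[h2b|[h3b|[h4|[h5|[h6|h7]]]]]]]]]].
- apply/(sRn ZY hR) => b.
  case: H1 => [hA|[hB hC]]; first by apply: (H2 hA) b; right; right.
  case: (H3 (conj hB hC)) => hh; apply: hh b; [right; right; right|right; right] => //.
- case: h1a => [r0 [r4 [h0 [h4 ->]]]].
  apply/(s1a ZY _ h4) => b0 b4.
  case: H1 => [hA|[hB hC]]; first by right; apply: (H2 hA) b4; right; left.
  case: (H3 (conj hB hC)) => hh.
  + by right; apply: hh b4; right; right; left.
  + by left; apply: hh b0; left.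
- case: h2a => [r0 [r3 [r' [h0 [h3 [h' ->]]]]]].
  apply/(s2a ZY) => b0 b3 nh' b'.
  case: H1 => [hA|[hB hC]].
  + by exfalso; apply: nh'; apply: hA b'; case: h' => h'; [left|right;left].
  + case: (H3 (conj hB hC)) => hh.
    * by right; apply: hh b3; right; left.
    * by left; apply: hh b0; left.
- case: h3a => [r0 [r3 [h [D [h0 [h3 [hh0 [hD ->]]]]]]]].
  apply/(s3a ZY) => b0 Yh bD b3 nh3.
  have nC : ~ C' Y by move=> hc; apply: nh3; apply: hc (mono_bb ZY b3); right; left.
  case: (classic (B' Y)) => hB.
  + case: (H3 (conj hB nC)) => hh.
    * by exfalso; apply: nh3; apply: (mono_hh ZY); apply: hh b3; right; left.
    * by apply: hh b0; left.
  + exfalso; apply: (exclB hB _ hh0 Yh hD bD); by case: H1 => // -[].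
- case: h1b => [r2 [r4 [h2 [h4 ->]]]].
  apply/(s1b ZY _ h4) => b2 nh4 b4.
  case: H1 => [hA|[hB hC]].
  + by exfalso; apply: nh4; apply: hA b4; right; left.
  + by case: (H3 (conj hB hC)) => hh; apply: hh b2; [left|right; left].
- case: h2b => [r2 [r3 [r' [h2 [h3 [h' ->]]]]]].
  apply/(s2b ZY) => b2 nh b3 b'.
  case: H1 => [hA|[hB hC]].
  + by exfalso; apply: nh; right; apply: hA b'; case: h' => h'; [left|right;left].
  + by case: (H3 (conj hB hC)) => hh; apply: hh b2; [left|right; left].
- case: h3b => [r2 [r3 [h [D [h2 [h3 [hh2 [hD ->]]]]]]]].
  apply/(s3b ZY) => b2 nh3 b3 Yh bD.
  have nC : ~ C' Y by move=> hc; apply: nh3; apply: hc b3; right; left.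
  case: (classic (B' Y)) => hB.
  + by case: (H3 (conj hB nC)) => hh; apply: hh b2; [left|right; left].
  + exfalso; apply: (exclB hB _ hh2 Yh hD bD); by case: H1 => // -[].
- case: h4 => [r' [D [h' [hD [hdisj ->]]]]].
  apply/(s4 Z) => b' bD.
  case: (classic (A' Y)) => hA.
    by apply: (H2 hA) b'; case: h' => h'; [left|right;left].
  have [hB hC] : B' Y /\ ~ C' Y by case: H1.
  exfalso; have [r1 [hr [br nhr]]] := ex_notC hC; apply: nhr.
  case: hr => [h2|[h3|[h4|hn]]].
  + by apply: hB br; right; left.
  + by apply: (Dq_sound hD bD) br; left.
  + by apply: (Dq_sound hD bD) br; right.
  + by apply: hB br; right; right.
- case: h5 => [r' [r3 [r0 [D [h' [h3 [h0 [hD [hdisj ->]]]]]]]]].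
  apply/(s5 Z) => b' nh b0 b3 bD.
  case: (classic (A' Y)) => hA.
    by apply: (H2 hA) b'; case: h' => h'; [left|right;left].
  have [hB hC] : B' Y /\ ~ C' Y by case: H1.
  by exfalso; apply: nh; left; apply: hB b0; case: h0 => h0; [left|right; left].
- case: h6 => [r' [r3 [h [D [h' [h3 [hh [hD ->]]]]]]]].
  apply/(s6 Z) => b' nh3 b3 Yh bD.
  case: (classic (A' Y)) => hA.
    by apply: (H2 hA) b'; case: h' => h'; [left|right;left].
  have [hB hC] : B' Y /\ ~ C' Y by case: H1.
  exfalso; exact: (exclA hA hB hh Yh hD bD).
- case: h7 => [r0 [r3 [r3' [D [h [h0 [h3 [h3' [neq [hD [hh0 ->]]]]]]]]]]].
  apply/(s7 ZY) => b0 b3 nh3' b3' Yh bD.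
  have nC : ~ C' Y by move=> hc; apply: nh3'; apply: hc b3'; right; left.
  case: (classic (B' Y)) => hB.
  + case: (H3 (conj hB nC)) => hh.
    * by right; apply: hh b3; right; left.
    * by left; apply: hh b0; left.
  + exfalso; apply: (exclB hB _ hh0 Yh hD bD); by case: H1 => // -[].
Qed.

Let FP := fSP_pre q (of_prog P0).
Lemma memRn r : Rn r -> FP r. Proof. by left. Qed.
Lemma mem1a r0 r4 : R0 r0 -> R4 r4 -> FP (H r0 `|` Hq q r4, Bq q r0 `|` B r4).
Proof. by move=> h0 h4; right; left; exists r0, r4. Qed.
Lemma mem2a r0 r3 r' : R0 r0 -> R3 r3 -> R1 r' \/ R4 r' -> FP (H r0 `|` Hq q r3,
   Bq q r0 `|` Bq q r3 `|` notA (Hq q r') `|` nnS (Bq q r')).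
Proof. by move=> h0 h3 h'; right; right; left; exists r0, r3, r'. Qed.
Lemma mem3a r0 r3 h D : R0 r0 -> R3 r3 -> h \in H r0 ->
  Dq q (minus_rule (union R0 R2) r0) D ->
  FP (H r0, Bq q r0 `|` [fset NNeg h] `|` D `|` Bq q r3 `|` notA (Hq q r3)).
Proof. by move=> h0 h3 hh hD; do 3 right; left; exists r0, r3, h, D. Qed.
Lemma mem1b r2 r4 : R2 r2 -> R4 r4 -> FP (H r2, Bq q r2 `|` notA (Hq q r4) `|` nnS (B r4)).
Proof. by move=> h2 h4; do 4 right; left; exists r2, r4. Qed.
Lemma mem3b r2 r3 h D : R2 r2 -> R3 r3 -> h \in H r2 ->
  Dq q (minus_rule (union R0 R2) r2) D ->
  FP (H r2, Bq q r2 `|` notA (Hq q r3) `|` nnS (Bq q r3 `|` [fset Pos h]) `|` D).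
Proof. by move=> h2 h3 hh hD; do 6 right; left; exists r2, r3, h, D. Qed.
Lemma mem4 r' D : R1 r' \/ R4 r' -> Dq q (union R3 R4) D -> D `&` notS (Bq q r') = fset0 ->
  FP (Hq q r', Bq q r' `|` D).
Proof. by move=> h' hD hd; do 7 right; left; exists r', D. Qed.
Lemma mem5 r' r3 r0 D : R1 r' \/ R4 r' -> R3 r3 -> R0 r0 \/ R2 r0 -> Dq q R4 D ->
  D `&` notS (Bq q r') = fset0 ->
  FP (Hq q r', Bq q r' `|` notA (H r0 `|` Hq q r3) `|` nnS (Bq q r0 `|` Bq q r3) `|` D).
Proof. by move=> h' h3 h0 hD hd; do 8 right; left; exists r', r3, r0, D. Qed.
Lemma mem6 r' r3 h D : R1 r' \/ R4 r' -> R3 r3 -> h \in Hq q r' ->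
  Dq q (minus_rule (union R1 R4) r') D ->
  FP (Hq q r', Bq q r' `|` notA (Hq q r3) `|` nnS (Bq q r3 `|` [fset Pos h]) `|` D).
Proof. by move=> h' h3 hh hD; do 9 right; left; exists r', r3, h, D. Qed.
Lemma mem7 r0 r3 r3' D h : R0 r0 -> R3 r3 -> R3 r3' -> r3 <> r3' ->
  Dq q (minus_rule (union R0 R2) r0) D -> h \in H r0 ->
  FP (H r0 `|` Hq q r3,
   Bq q r0 `|` Bq q r3 `|` notA (Hq q r3') `|` nnS (Bq q r3' `|` [fset Pos h]) `|` D).
Proof. by move=> h0 h3 h3' ne hD hh; do 10 right; exists r0, r3, r3', D, h. Qed.

Lemma ex_notCZ Z : ~ C' Z -> exists r, (R2 r \/ R3 r \/ R4 r \/ Rn r) /\ bb Z r /\ ~ hh Z r.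
Proof.
move=> h; apply: NNPP => hn; apply: h => r hr hb; apply: NNPP => nh; apply: hn; by exists r.
Qed.

Lemma get_h r Z : (forall a, Z a -> Y a) -> B' Y -> R0 r \/ R2 r -> bb Z r ->
  exists h, h \in H r /\ Y h.
Proof.
move=> ZY hB hr /(mono_bb ZY) /hB.
case/(_ _)=> [|a [ha Ya]]; first by case: hr; [left|right;left].
by exists a; move: ha; rewrite !inE => /andP [].
Qed.

Lemma viol34 : B' Y -> ~ C' Y -> exists r, (R3 r \/ R4 r) /\ bb Y r /\ ~ hh Y r.
Proof.
move=> hB nC; have [r [hr [br nhr]]] := ex_notC nC.
case: hr => [h2|[h3|[h4|hn]]].
- by exfalso; apply: nhr; apply: hB br; right; left.
- by exists r; split=> //; left.
- by exists r; split=> //; right.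
- by exfalso; apply: nhr; apply: hB br; right; right.
Qed.

Lemma Pn_of r : R0 r \/ R1 r \/ R2 r \/ R3 r \/ R4 r -> Pn r.
Proof. by case=> [[]|[[]|[[]|[[]|[]]]]]. Qed.

Section Compl.
Variable X : interp A.
Hypothesis XY : forall a, X a -> Y a.
Hypothesis hF : forall r, FP r -> ruleH Y Y r /\ ruleH X Y r.
Let FY : forall r, FP r -> ruleH Y Y r := fun r hr => (hF hr).1.
Let FX : forall r, FP r -> ruleH X Y r := fun r hr => (hF hr).2.
Let YY : forall a, Y a -> Y a := fun a h => h.

Lemma v34 r' : R1 r' \/ R4 r' -> bb Y r' -> ~ hh Y r' ->
    exists r, (R3 r \/ R4 r) /\ bb Y r /\ ~ hh Y r.
Proof.
  move=> h' b' nh'; apply: NNPP => hn.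
  have [D [hD bD]] : exists D, Dq q (union R3 R4) D /\ forall Z, bodyH Z Y D.
    apply: Dq_ex.
    - by move=> r [h3|h4]; apply: Pn_of; [do 3 right; left|do 4 right].
    - by move=> r hr br; apply: NNPP => nhr; apply: hn; exists r.
  have := FY (mem4 h' hD (Dq_disj hD (bD Y) b')).
  by move/(s4 Y) => /(_ b' (bD Y)).
Qed.

Lemma compl1 : A' Y \/ (B' Y /\ ~ C' Y).
Proof.
case: (classic (A' Y)) => hA; [by left|right].
have [r' [hr' [b' nh']]] := ex_notA hA.
have h' : R1 r' \/ R4 r'.
  case: hr' => [h|[h|hn]]; [by left|by right|].
  by exfalso; apply: nh'; have /(sRn YY hn) := FY (memRn hn); apply.
split.
+ move=> r hr br; apply: NNPP => nhr.
  have h02 : R0 r \/ R2 r.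
    case: hr => [h0|[h2|hn]]; [by left|by right|].
    by exfalso; apply: nhr; have /(sRn YY hn) := FY (memRn hn); apply.
  case: h02 => [h0|h2].
  * case: (classic (exists r4, R4 r4 /\ bb Y r4 /\ ~ hh Y r4)) => [[r4 [h4 [b4 nh4]]]|n4].
      have /(s1a YY _ h4) := FY (mem1a h0 h4); move=> /(_ br b4); tauto.
    have [r3 [[h3|h4] [b3 nh3]]] := v34 h' b' nh'; last by apply: n4; exists r3.
    have [D [hD bD]] : exists D, Dq q R4 D /\ forall Z, bodyH Z Y D.
      apply: Dq_ex; first by move=> r4 h4; apply: Pn_of; do 4 right.
      by move=> r4 h4 b4; apply: NNPP => nh4; apply: n4; exists r4.
    have := FY (mem5 h' h3 (or_introl h0) hD (Dq_disj hD (bD Y) b')).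
    move/(s5 Y) => /(_ b' _ br b3 (bD Y)); tauto.
  * case: (classic (exists r4, R4 r4 /\ bb Y r4 /\ ~ hh Y r4)) => [[r4 [h4 [b4 nh4]]]|n4].
      by have /(s1b YY _ h4) := FY (mem1b h2 h4); move=> /(_ br nh4 b4).
    have [r3 [[h3|h4] [b3 nh3]]] := v34 h' b' nh'; last by apply: n4; exists r3.
    have [D [hD bD]] : exists D, Dq q R4 D /\ forall Z, bodyH Z Y D.
      apply: Dq_ex; first by move=> r4 h4; apply: Pn_of; do 4 right.
      by move=> r4 h4 b4; apply: NNPP => nh4; apply: n4; exists r4.
    have := FY (mem5 h' h3 (or_intror h2) hD (Dq_disj hD (bD Y) b')).
    move/(s5 Y) => /(_ b' _ br b3 (bD Y)); tauto.
+ move=> hC; have [r [[h3|h4] [br nhr]]] := v34 h' b' nh'; apply: nhr; apply: hC br.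
  * by right; left.
  * by right; right; left.
Qed.

Lemma compl2 : A' Y -> A' X.
Proof.
move=> hA r hr bX.
case: hr => [h1|[h4|hn]]; last first.
  by have /(sRn XY hn) := FX (memRn hn); apply.
all: have h' : R1 r \/ R4 r by [left|right].
all: have bY := mono_bb XY bX.
all: case: (classic (exists r3, R3 r3 /\ bb Y r3 /\ ~ hh Y r3)) => [[r3 [h3 [b3 nh3]]]|n3].
all: try (have [D [hD bD]] : exists D, Dq q (minus_rule (union R1 R4) r) D /\ forall Z, bodyH Z Y D;
    [apply: Dq_ex; [by move=> r1 [[h1'|h4'] _]; apply: Pn_of; [right; left|do 4 right]
                   |by move=> r1 [hr1 _] b1; apply: hA b1; case: hr1; [left|right;left]]|];
  have [a [ha Ya]] := hA r (ltac:(by [left|right;left])) bY;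
  have := FX (mem6 h' h3 ha hD); move/(s6 X) => /(_ bX nh3 b3 Ya (bD X)); done).
all: have [D [hD bD]] : exists D, Dq q (union R3 R4) D /\ forall Z, bodyH Z Y D;
    [apply: Dq_ex; [by move=> r1 [h3|h4']; apply: Pn_of; [do 3 right; left|do 4 right]
                   |move=> r1 [h3|h4'] b1; [apply: NNPP => nh1; apply: n3; by exists r1
                                           |apply: hA b1; by right; left]]|].
all: have := FX (mem4 h' hD (Dq_disj hD (bD Y) bY)).
all: by move/(s4 X) => /(_ bX (bD X)).
Qed.


Lemma compl3 : B' Y /\ ~ C' Y -> C' X \/ B' X.
Proof.
move=> [hB nC]; case: (classic (C' X)) => hCX; [by left|right].
have DB : forall r0, exists D, Dq q (minus_rule (union R0 R2) r0) D /\ forall Z, bodyH Z Y D.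
  move=> r0; apply: Dq_ex.
  - by move=> r1 [[h0|h2] _]; apply: Pn_of; [left|right; right; left].
  - by move=> r1 [hr1 _] b1; apply: hB b1; case: hr1; [left|right; left].
have noR2 : forall r2, R2 r2 -> bb X r2 -> hh X r2.
  move=> r2 h2 b2; apply: NNPP => nh2.
  have [h [hh2 Yh]] := get_h XY hB (or_intror h2) b2.
  have [rv [[h3|h4] [br nhr]]] := viol34 hB nC.
  - have [D [hD bD]] := DB r2.
    have := FX (mem3b h2 h3 hh2 hD); move/(s3b XY) => /(_ b2 nhr br Yh (bD X)); done.
  - by have := FX (mem1b h2 h4); move/(s1b XY _ h4) => /(_ b2 nhr br).
move=> r hr bX; apply: NNPP => nhX.
have h0 : R0 r.
  case: hr => [h0|[h2|hn]] //; first by exfalso; apply: nhX; apply: noR2.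
  by exfalso; apply: nhX; have /(sRn XY hn) := FX (memRn hn); apply.
have [rc [hrc [bc nhc]]] := ex_notCZ hCX.
have [h [hh0 Yh]] := get_h XY hB (or_introl h0) bX.
case: hrc => [h2|[h3c|[h4|hn]]].
- by apply: nhc; apply: noR2.
- have [rv [[h3|h4] [br nhr]]] := viol34 hB nC.
  + have [D [hD bD]] := DB r.
    case: (classic (rc = rv)) => e.
    * subst rv.
      by have := FX (mem3a h0 h3c hh0 hD); move/(s3a XY) => /(_ bX Yh (bD X) bc nhr).
    * have := FX (mem7 h0 h3c h3 e hD hh0); move/(s7 XY) => /(_ bX bc nhr br Yh (bD X)).
      tauto.
  + have := FX (mem2a h0 h3c (or_intror h4)); move/(s2a XY) => /(_ bX bc nhr br); tauto.
- have := FX (mem1a h0 h4); move/(s1a XY _ h4) => /(_ bX bc); tauto.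
- by apply: nhc; have /(sRn XY hn) := FX (memRn hn); apply.
Qed.

End Compl.

Lemma central X : (forall a, X a -> Y a) ->
  (forall r, FP r -> ruleH Y Y r /\ ruleH X Y r) <->
  ((A' Y \/ (B' Y /\ ~ C' Y)) /\ (A' Y -> A' X) /\ (B' Y /\ ~ C' Y -> C' X \/ B' X)).
Proof.
move=> XY; split.
- move=> hF; split; [exact: compl1 hF|split; [exact: compl2 hF|exact: compl3 hF]].
- move=> [H1 [H2 H3]] r hr; split.
  + apply: (sound (fun a h => h) H1 (fun h => h) _ hr) => -[hB _]; by right.
  + exact: (sound XY H1 H2 H3 hr).
Qed.

Definition Phi (M : interp A -> interp A -> Prop) X :=
  (M Y Y \/ (M (addq Y) (addq Y) /\ ~ M Y (addq Y))) /\ (M Y Y -> M X Y) /\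
  (M (addq Y) (addq Y) /\ ~ M Y (addq Y) -> M X (addq Y) \/ M (addq X) (addq Y)).

Lemma HTm_split (Q : rset A) U W : HTm Q U W <->
  (forall a, U a -> W a) /\ (forall r, Q r -> ruleH W W r) /\ (forall r, Q r -> ruleH U W r).
Proof.
split; first by move=> [h1 h2]; split=> //; split=> r /h2 [].
by move=> [h1 [h2 h3]]; split=> // r hr; split; [apply: h2|apply: h3].
Qed.

Lemma Phi_equiv X : (forall a, X a -> Y a) ->
  Phi (HTm (of_prog P0)) X <->
  ((A' Y \/ (B' Y /\ ~ C' Y)) /\ (A' Y -> A' X) /\ (B' Y /\ ~ C' Y -> C' X \/ B' X)).
Proof.
move=> XY.
have YY : forall a, Y a -> Y a by [].
have YYq : forall a, Y a -> addq Y a by move=> a h; left.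
have XYq : forall a, X a -> addq Y a by move=> a /XY h; left.
have XqYq : forall a, addq X a -> addq Y a by move=> a [/XY h|->]; [left|right].
have e1 : HTm (of_prog P0) Y Y <-> A' Y.
  rewrite -NF_HTm HTm_split -(MA_iff YY); tauto.
have e2 : HTm (of_prog P0) X Y <-> A' Y /\ A' X.
  rewrite -NF_HTm HTm_split -(MA_iff YY) -(MA_iff XY); tauto.
have e3 : HTm (of_prog P0) (addq Y) (addq Y) <-> B' Y.
  rewrite -NF_HTm HTm_split -MB_iff; tauto.
have e4 : HTm (of_prog P0) Y (addq Y) <-> B' Y /\ C' Y.
  rewrite -NF_HTm HTm_split -MB_iff -(MC_iff YY); tauto.
have e5 : HTm (of_prog P0) X (addq Y) <-> B' Y /\ C' X.
  rewrite -NF_HTm HTm_split -MB_iff -(MC_iff XY); tauto.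
have e6 : HTm (of_prog P0) (addq X) (addq Y) <-> B' Y /\ B' X.
  rewrite -NF_HTm HTm_split -!MB_iff; tauto.
rewrite /Phi; move: e1 e2 e3 e4 e5 e6; tauto.
Qed.
End Lev.

Definition delq U : interp A := fun a => U a /\ a != q.
Lemma agree_delq U : agree U (delq U).
Proof. by move=> a aq; rewrite /delq; split=> [h|[]]. Qed.

Lemma ruleH_qfree r U W : qfB (B r) -> qfH (H r) ->
  ruleH U W r <-> ruleH (delq U) (delq W) r.
Proof.
move=> hB hH; split=> h hb.
- apply: (headH_agree hH (agree_delq U)); apply: h.
  exact: (bodyH_agree hB (agree_sym (agree_delq U)) (agree_sym (agree_delq W)) hb).
- apply: (headH_agree hH (agree_sym (agree_delq U))); apply: h.
  exact: (bodyH_agree hB (agree_delq U) (agree_delq W) hb).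
Qed.

Lemma qfBU S1 S2 : qfB S1 -> qfB S2 -> qfB (S1 `|` S2).
Proof. by move=> h1 h2 l; rewrite inE => /orP [/h1|/h2]. Qed.
Lemma qfHU T1 T2 : qfH T1 -> qfH T2 -> qfH (T1 `|` T2).
Proof. by rewrite /qfH inE => /negbTE -> /negbTE ->. Qed.
Lemma qfB_notA T : qfH T -> qfB (notA T).
Proof.
move=> hT l /imfsetP [a /= ha ->] /=; apply/eqP => e; subst a.
by rewrite /qfH ha in hT.
Qed.
Lemma qfB_nnS S : qfB S -> qfB (nnS S).
Proof. by move=> hS l /imfsetP [l' /= hl ->]; have := hS l' hl; case: l' hl. Qed.
Lemma qfB1 l : atom_of l != q -> qfB [fset l].
Proof. by move=> h l'; rewrite inE => /eqP ->. Qed.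
Lemma qfB_D (Q : rset A) D : Dq q Q D -> qfB D.
Proof.
move=> [c [hc hD]] x /hD [r [Qr <-]].
case: (hc r Qr) => [[l [hl ->]]|[h [hh ->]]].
- have := @qfB_Bq r l hl; by case: l hl.
- by move: hh; rewrite !inE => /andP [].
Qed.
Lemma qfH02 r : R0 r \/ R2 r -> qfH (H r).
Proof. by case=> [/R0F [] //|[_ [_ ?]]]. Qed.
Lemma qfB4 r : R4 r -> qfB (B r).
Proof.
move=> h4 l hl; have [np nq] := R4F h4; have nnq := h4.2.1.
apply/eqP => e; case: l hl e => a hl /= e; subst a.
- by rewrite hl in np.
- by rewrite hl in nq.
- by rewrite hl in nnq.
Qed.
Lemma qfRn r : Rn r -> qfB (B r) /\ qfH (H r).
Proof.
move=> [_ ho]; split.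
- move=> l hl; apply/eqP => e; apply: ho; right; by exists l.
- by apply/negP => h; apply: ho; left.
Qed.
Lemma neq_H0 r h : R0 r \/ R2 r -> h \in H r -> h != q.
Proof. by move=> /qfH02 hq hh; apply/eqP => e; subst h; rewrite /qfH hh in hq. Qed.
Lemma neq_Hq r h : h \in Hq q r -> h != q.
Proof. by rewrite !inE => /andP []. Qed.

Ltac qfs := repeat first
  [ apply: qfBU | apply: qfHU | apply: qfB_notA | apply: qfB_nnS
  | solve [exact: qfB_Bq] | solve [exact: qfH_Hq]
  | solve [apply: qfB_D; eassumption]
  | solve [apply: qfB4; eassumption]
  | solve [apply: qfH02; eassumption || (left; eassumption) || (right; eassumption)]
  | solve [apply: qfB1; apply: neq_Hq; eassumption]
  | solve [apply: qfB1; apply: neq_H0; [(left; eassumption) || (right; eassumption) | eassumption]] ].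

Lemma fSP_qfree r : fSP_pre q (of_prog P0) r -> qfB (B r) /\ qfH (H r).
Proof.
case=> [hR|[h1a|[h2a|[h3a|[h1b|[h2b|[h3b|[h4|[h5|[h6|h7]]]]]]]]]].
- exact: qfRn.
- by case: h1a => [r0 [r4 [h0 [h4 ->]]]]; split=> /=; qfs.
- by case: h2a => [r0 [r3 [r' [h0 [h3 [h' ->]]]]]]; split=> /=; qfs.
- by case: h3a => [r0 [r3 [h [D [h0 [h3 [hh0 [hD ->]]]]]]]]; split=> /=; qfs.
- by case: h1b => [r2 [r4 [h2 [h4 ->]]]]; split=> /=; qfs.
- by case: h2b => [r2 [r3 [r' [h2 [h3 [h' ->]]]]]]; split=> /=; qfs.
- by case: h3b => [r2 [r3 [h [D [h2 [h3 [hh2 [hD ->]]]]]]]]; split=> /=; qfs.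
- by case: h4 => [r' [D [h' [hD [hdisj ->]]]]]; split=> /=; qfs.
- by case: h5 => [r' [r3 [r0 [D [h' [h3 [h0 [hD [hdisj ->]]]]]]]]]; split=> /=; qfs.
- by case: h6 => [r' [r3 [h [D [h' [h3 [hh [hD ->]]]]]]]]; split=> /=; qfs.
- by case: h7 => [r0 [r3 [r3' [D [h [h0 [h3 [h3' [neq [hD [hh0 ->]]]]]]]]]]]; split=> /=; qfs.
Qed.

Lemma NF_qfree (Q : rset A) r : (forall r, Q r -> qfB (B r) /\ qfH (H r)) ->
  NF Q r -> qfB (B r) /\ qfH (H r).
Proof.
move=> hQ [[r0 [Qr0 [_ ->]]] _]; have [h1 h2] := hQ r0 Qr0; split.
- by move=> l; rewrite /simp /B /= !inE => /andP [/h1].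
- rewrite /qfH /simp /H /= !inE; apply/negP => /andP [hq _]; by rewrite /qfH /H hq in h2.
Qed.

Lemma charact X Y : HTm (fSP q (of_prog P0)) X Y <->
  (forall a, X a -> Y a) /\ Phi (delq Y) (HTm (of_prog P0)) (delq X).
Proof.
have hY0 : ~ delq Y q by case=> _; rewrite eqxx.
have YY : forall a, Y a -> Y a by [].
rewrite HTm_split; split.
- move=> [XY [h1 h2]].
  have XY0 : forall a, delq X a -> delq Y a by move=> a [/XY h1' h2']; split.
  split=> //; apply/(Phi_equiv hY0 XY0); apply/(central hY0 XY0) => r hr.
  have h1' := iffLR (NF_ruleH _ YY) h1 r hr.
  have h2' := iffLR (NF_ruleH _ XY) h2 r hr.
  have [qB qH] := fSP_qfree hr.
  by split; [exact: (iffLR (ruleH_qfree _ _ qB qH) h1')|exact: (iffLR (ruleH_qfree _ _ qB qH) h2')].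
- move=> [XY hP].
  have XY0 : forall a, delq X a -> delq Y a by move=> a [/XY h1' h2']; split.
  have hc := (iffRL (central hY0 XY0)) (iffLR (Phi_equiv hY0 XY0) hP).
  split=> //; split.
  + apply/(NF_ruleH _ YY) => r hr; have [qB qH] := fSP_qfree hr.
    by apply: (iffRL (ruleH_qfree _ _ qB qH)); exact: (hc r hr).1.
  + apply/(NF_ruleH _ XY) => r hr; have [qB qH] := fSP_qfree hr.
    by apply: (iffRL (ruleH_qfree _ _ qB qH)); exact: (hc r hr).2.
Qed.

End Main.

Theorem proposition5 (A : choiceType) (P P' : {fset rule A}) (q : A) :
  strongly_equiv (of_prog P) (of_prog P') ->
  strongly_equiv (fSP q (of_prog P)) (fSP q (of_prog P')).
Proof.
move=> hSE; apply: HTeq_SE => X Y.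
have eM : HTm (of_prog P) = HTm (of_prog P').
  apply: functional_extensionality => U; apply: functional_extensionality => W.
  apply: propositional_extensionality; exact: SE_HTeq.
split=> /charact [XY hP]; apply/charact; split=> //.
- by rewrite -eM.
- by rewrite eM.
Qed.
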